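(* Let $h_1$ and $h_2$ be hybrid path-sums such that the sum $a h_1 \boxplus h_2$ is defined, and let $a$ be a constructible real number. Then $\xi(a h_1 \boxplus h_2) = a\,\xi(h_1) + \xi(h_2)$ (as functions of histories). Moreover, whenever $h_1 \otimes h_2$ is defined, $\xi(h_1 \otimes h_2) = \xi(h_1)\otimes \xi(h_2)$, i.e. $\xi(h_1\otimes h_2)(\eta_1\otimes\eta_2)=\xi(h_1)(\eta_1)\otimes\xi(h_2)(\eta_2)$ for all histories $\eta_1$ of $h_1$ and $\eta_2$ of $h_2$.
   Context: Hybrid path-sums (HPS). Fix Boolean input variables $x_i$ and Boolean path variables $y_j$. An HPS is $h=\langle P, o, s\rangle_{su}$ where: $su$ (the support) is a finite set of path variables, and only input variables and variables of $su$ occur in $P,o,s$; the output $o=(o_{Qu},o_{Cl})$ consists of a quantum memory $o_{Qu}$, a finite map from quantum addresses to Boolean polynomials (over $\mathbb F_2$) in the $x_i,y_j$, and a classical memory $o_{Cl}$, a stack (list) of finite partial maps from classical addresses to Boolean polynomials in the $x_i,y_j$ recording the values of the classical memory at successive time steps (the top entry is the current value; the height of the stack is the age of $h$); the phase $P$ is a polynomial in the $x_i,y_j$ with dyadic rational coefficients; the scalar $s$ is a constructible-real-valued expression in the $x_i,y_j$. A history $\eta$ is a full Boolean instantiation of a classical memory stack. For fixed values of the inputs, the vector map of $h$ is $\xi(h)(\eta)=\sum_{\vec y\in\{0,1\}^{su},\ o_{Cl}(\vec y)=\eta} s(\vec y)\,e^{2\pi i P(\vec y)}\,|o_{Qu}(\vec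 y)\rangle$, a vector in the Hilbert space spanned by computational basis states of the quantum addresses. Sum: for $h_1=\langle P_1,o_1,s_1\rangle_{su_1}$, $h_2=\langle P_2,o_2,s_2\rangle_{su_2}$ with the same addresses and age, and $r$ a constructible real, $r h_1\boxplus h_2:=\langle P,o,s\rangle_{su_1\cup su_2\cup\{y_f\}}$ with $y_f$ a fresh path variable, where (using Boolean selection on $y_f$) for $y_f=0$: $P=P_1$, $o=o_1$, $s=r\,s_1\prod_{y\in su_2\setminus su_1}y$; for $y_f=1$: $P=P_2$, $o=o_2$, $s=s_2\prod_{y\in su_1\setminus su_2}y$. Tensor: if $su_1\cap su_2=\emptyset$ and the quantum addresses and the classical (address, time) cells of $o_1,o_2$ are disjoint, $h_1\otimes h_2:=\langle P_1+P_2, o_1\cup o_2, s_1 s_2\rangle_{su_1\cup su_2}$; the combined history of $\eta_1,\eta_2$ is written $\eta_1\otimes\eta_2$. *)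

(* Defs.v *)
From HB Require Import structures.
From mathcomp Require Import all_boot all_order all_algebra.
From mathcomp Require Import finmap.
From mathcomp Require Import complex.
From mathcomp Require Import reals trigo.
Set Implicit Arguments. Unset Strict Implicit. Unset Printing Implicit Defensive.
Import Order.TTheory GRing.Theory Num.Theory.
Local Open Scope ring_scope.
Local Open Scope fset_scope.
Local Open Scope fmap_scope.
Local Open Scope complex_scope.

(* Variables: inl i = input variable x_i, inr j = path variable y_j.       *)
Definition var := (nat + nat)%type.
Definition xv (i : nat) : var := inl i.
Definition yv (j : nat) : var := inr j.

Definition var_eval (vx vy : nat -> bool) (v : var) : bool :=
  match v with inl i => vx i | inr j => vy j end.

Definition monomial := seq var.
Definition mon_eval vx vy (m : monomial) : bool := all (var_eval vx vy) m.
Definition mon_yvars (m : monomial) : seq nat :=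
  pmap (fun v : var => if v is inr j then Some j else None) m.

Definition bpoly := seq monomial.
Definition bpoly_eval vx vy (p : bpoly) : bool :=
  foldr (fun m b => mon_eval vx vy m (+) b) false p.
Definition bpoly_yvars (p : bpoly) : seq nat := flatten (map mon_yvars p).

Definition dyadic := (int * nat)%type.
Definition dyadic_val (R : realType) (d : dyadic) : R := d.1%:~R / (2%:R ^+ d.2).
Definition phase := seq (dyadic * monomial).
Definition phase_eval (R : realType) vx vy (P : phase) : R :=
  \sum_(c <- P) dyadic_val R c.1 * (mon_eval vx vy c.2)%:R.
Definition phase_yvars (P : phase) : seq nat := flatten (map (fun c => mon_yvars c.2) P).

Inductive constructible (R : realType) : R -> Prop :=
| constr_rat (q : rat) : constructible (ratr q)
| constr_add x y : constructible x -> constructible y -> constructible (x + y)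
| constr_opp x : constructible x -> constructible (- x)
| constr_mul x y : constructible x -> constructible y -> constructible (x * y)
| constr_inv x : x != 0 -> constructible x -> constructible (x^-1)
| constr_sqrt x : 0 <= x -> constructible x -> constructible (Num.sqrt x).

(* Classical memory: a stack of finite partial maps; the stack is a list  *)
(* indexed by time steps (nth 0 = oldest, last = top/current value); its  *)
(* size is the age.                                                       *)
Definition qmem := {fmap nat -> bpoly}.
Definition cmem := seq {fmap nat -> bpoly}.

(* Hybrid path-sum  < P, (o_Qu, o_Cl), s >_su  (scalar given by its value  *)
(* as a function of the valuation of the variables).                      *)
Record hps (R : realType) := HPS {
  hsu : {fset nat};
  hP  : phase;
  hqu : qmem;
  hcl : cmem;
  hs  : (nat -> bool) -> (nat -> bool) -> R }.

Definition wf_hps (R : realType) (h : hps R) : Prop :=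
  [/\ {subset phase_yvars (hP h) <= hsu h},
      (forall k : domf (hqu h), {subset bpoly_yvars (hqu h k) <= hsu h}),
      (forall m, m \in hcl h -> forall k : domf m, {subset bpoly_yvars (m k) <= hsu h}),
      (forall vx vy vy', {in hsu h, vy =1 vy'} -> hs h vx vy = hs h vx vy') &
      (forall vx vy, constructible (hs h vx vy))].

Definition history := seq {fmap nat -> bool}.
Definition basis := {fmap nat -> bool}.

Definition inst_map vx vy (m : {fmap nat -> bpoly}) : {fmap nat -> bool} :=
  [fmap k : domf m => bpoly_eval vx vy (m k)].
Definition inst_stack vx vy (s : cmem) : history := map (inst_map vx vy) s.

Definition is_history (R : realType) (h : hps R) (eta : history) : bool :=
  all2 (fun (m : {fmap nat -> bpoly}) (e : {fmap nat -> bool}) => domf e == domf m) (hcl h) eta.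

Definition qvec (R : realType) := basis -> R[i].
Definition ket (R : realType) (b : basis) : qvec R := fun b' => ((b' == b)%:R : R)%:C.
Definition expi (R : realType) (t : R) : R[i] :=
  (cos (2%:R * pi * t)) +i* (sin (2%:R * pi * t)).

Definition valS (S : {fset nat}) : nat -> bool := fun j => j \in S.

Definition xi (R : realType) (h : hps R) (vx : nat -> bool) (eta : history) : qvec R :=
  fun b => \sum_(S <- fpowerset (hsu h) | inst_stack vx (valS S) (hcl h) == eta)
     (hs h vx (valS S))%:C * expi (phase_eval R vx (valS S) (hP h))
       * ket R (inst_map vx (valS S) (hqu h)) b.

Definition bsel (yf : nat) (p1 p2 : bpoly) : bpoly :=
  (* (1 + yf) p1 + yf p2  over F_2 *)
  p1 ++ [seq yv yf :: m | m <- p1] ++ [seq yv yf :: m | m <- p2].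
Definition psel (yf : nat) (P1 P2 : phase) : phase :=
  (* (1 - yf) P1 + yf P2 *)
  P1 ++ [seq ((- c.1.1, c.1.2), yv yf :: c.2) | c <- P1]
     ++ [seq (c.1, yv yf :: c.2) | c <- P2].
Definition msel (yf : nat) (m1 m2 : {fmap nat -> bpoly}) : {fmap nat -> bpoly} :=
  [fmap k : domf m1 => bsel yf (m1 k) (odflt [::] m2.[? val k])].

Definition prodY (R : realType) (A : {fset nat}) (vy : nat -> bool) : R :=
  \prod_(j <- A) (vy j)%:R.

Definition sum_defined (R : realType) (h1 h2 : hps R) : Prop :=
  [/\ domf (hqu h1) = domf (hqu h2),
      size (hcl h1) = size (hcl h2) &
      forall t, domf (nth [fmap] (hcl h1) t) = domf (nth [fmap] (hcl h2) t)].

Definition boxplus (R : realType) (r : R) (yf : nat) (h1 h2 : hps R) : hps R :=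
  HPS (hsu h1 `|` hsu h2 `|` [fset yf])
      (psel yf (hP h1) (hP h2))
      (msel yf (hqu h1) (hqu h2))
      [seq msel yf mm.1 mm.2 | mm <- zip (hcl h1) (hcl h2)]
      (fun vx vy => if vy yf then hs h2 vx vy * prodY R (hsu h1 `\` hsu h2) vy
                    else r * hs h1 vx vy * prodY R (hsu h2 `\` hsu h1) vy).

Definition stack_union (V : Type) (s1 s2 : seq {fmap nat -> V}) : seq {fmap nat -> V} :=
  mkseq (fun t => catf (nth [fmap] s1 t) (nth [fmap] s2 t)) (maxn (size s1) (size s2)).

Definition tensor_defined (R : realType) (h1 h2 : hps R) : Prop :=
  [/\ [disjoint hsu h1 & hsu h2],
      [disjoint domf (hqu h1) & domf (hqu h2)] &
      forall t, [disjoint domf (nth [fmap] (hcl h1) t) & domf (nth [fmap] (hcl h2) t)]].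

Definition tensor (R : realType) (h1 h2 : hps R) : hps R :=
  HPS (hsu h1 `|` hsu h2) (hP h1 ++ hP h2) (catf (hqu h1) (hqu h2))
      (stack_union (hcl h1) (hcl h2)) (fun vx vy => hs h1 vx vy * hs h2 vx vy).

Definition hist_tensor (eta1 eta2 : history) : history := stack_union eta1 eta2.

Definition vtensor (R : realType) (A1 A2 : {fset nat}) (v1 v2 : qvec R) : qvec R :=
  fun b => if domf b == A1 `|` A2 then v1 b.[& A1] * v2 b.[& A2] else 0.

(* Main.v *)
Require Import Defs.
From HB Require Import structures.
From mathcomp Require Import all_boot all_order all_algebra.
From mathcomp Require Import finmap complex reals trigo.
From mathcomp Require Import ring.
Import GRing.Theory Num.Theory.
Local Open Scope ring_scope.
Local Open Scope complex_scope.

Section Helpers.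
Local Open Scope fset_scope.
Local Open Scope fmap_scope.

Lemma mon_eval_eq vx vy vy' (m : monomial) :
  {in mon_yvars m, vy =1 vy'} -> mon_eval vx vy m = mon_eval vx vy' m.
Proof.
elim: m => [|[i|j] m IH] //= H.
  by rewrite IH.
rewrite /mon_yvars /= in H.
rewrite H ?mem_head // IH // => z zm; apply: H; by rewrite inE zm orbT.
Qed.

Lemma bpoly_eval_eq vx vy vy' (p : bpoly) :
  {in bpoly_yvars p, vy =1 vy'} -> bpoly_eval vx vy p = bpoly_eval vx vy' p.
Proof.
elim: p => [|m p IH] //= H.
rewrite /bpoly_eval /= -!/(bpoly_eval _ _ _).
rewrite (@mon_eval_eq vx vy vy') ?IH // => z zm; apply: H;
  rewrite /bpoly_yvars /= mem_cat zm ?orbT //.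
Qed.

Lemma phase_eval_eq (R : realType) vx vy vy' (P : phase) :
  {in phase_yvars P, vy =1 vy'} -> phase_eval R vx vy P = phase_eval R vx vy' P.
Proof.
rewrite /phase_eval; elim: P => [|c P IH] H; first by rewrite !big_nil.
rewrite !big_cons (@mon_eval_eq vx vy vy') ?IH // => z zm; apply: H;
  rewrite /phase_yvars /= mem_cat zm ?orbT //.
Qed.

Lemma fnd_mk (T : Type) (m : {fmap nat -> bpoly}) (G : nat -> bpoly -> T) k :
  ([fmap x : domf m => G (val x) (m x)]).[? k] = omap (G k) m.[? k].
Proof.
case: (fndP m k) => [kf|kNf]; last by rewrite not_fnd.
by rewrite (@in_fnd _ _ [fmap x : domf m => G (val x) (m x)] k kf) ffunE.
Qed.

Lemma fnd_inst vx vy (m : {fmap nat -> bpoly}) k :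
  (inst_map vx vy m).[? k] = omap (bpoly_eval vx vy) m.[? k].
Proof. exact: (@fnd_mk _ m (fun _ p => bpoly_eval vx vy p)). Qed.

Lemma inst_map_eq vx vy vy' (m : {fmap nat -> bpoly}) :
  (forall k : domf m, {in bpoly_yvars (m k), vy =1 vy'}) ->
  inst_map vx vy m = inst_map vx vy' m.
Proof.
move=> H; apply/fmapP => k; rewrite !fnd_inst.
case: (fndP m k) => // kf /=; congr Some; apply: bpoly_eval_eq.
exact: (H [` kf]).
Qed.


Lemma bpoly_eval_cat vx vy (p q : bpoly) :
  bpoly_eval vx vy (p ++ q) = bpoly_eval vx vy p (+) bpoly_eval vx vy q.
Proof.
elim: p => [|m p IH] //=.
by rewrite /bpoly_eval /= -!/(bpoly_eval _ _ _) IH addbA.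
Qed.

Lemma bpoly_eval_map vx vy v (p : bpoly) :
  bpoly_eval vx vy [seq v :: m | m <- p] = var_eval vx vy v && bpoly_eval vx vy p.
Proof.
elim: p => [|m p IH] /=; first by rewrite andbF.
rewrite /bpoly_eval /= -!/(bpoly_eval _ _ _) IH.
by case: (var_eval vx vy v).
Qed.

Lemma bsel_eval vx vy yf p1 p2 :
  bpoly_eval vx vy (bsel yf p1 p2) =
  if vy yf then bpoly_eval vx vy p2 else bpoly_eval vx vy p1.
Proof.
rewrite /bsel !bpoly_eval_cat !bpoly_eval_map /=.
by case: (vy yf) => /=; [rewrite addbA addbb | rewrite addbF].
Qed.

Lemma psel_eval (R : realType) vx vy yf P1 P2 :
  phase_eval R vx vy (psel yf P1 P2) =
  if vy yf then phase_eval R vx vy P2 else phase_eval R vx vy P1.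
Proof.
rewrite /psel /phase_eval !big_cat !big_map /=.
case: (vy yf) => /=.
  rewrite addrA -big_split /= big1 ?add0r // => c _.
  by rewrite /dyadic_val /= mulrNz !mulNr subrr.
by rewrite [X in (_ + (_ + X))%R]big1 ?[X in (_ + (X + _))%R]big1 ?addr0 // => c _; rewrite mulr0n mulr0.
Qed.

Lemma msel_inst vx vy yf (m1 m2 : {fmap nat -> bpoly}) :
  domf m1 = domf m2 ->
  inst_map vx vy (msel yf m1 m2) =
  if vy yf then inst_map vx vy m2 else inst_map vx vy m1.
Proof.
move=> Hd; apply/fmapP => k.
rewrite fnd_inst /msel (@fnd_mk _ m1 (fun k p => bsel yf p (odflt [::] m2.[? k]))).
case: (fndP m1 k) => [kf|kNf] /=.
  have kf2 : k \in domf m2 by rewrite -Hd.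
  rewrite bsel_eval; case: (vy yf); rewrite fnd_inst ?(in_fnd kf) ?(in_fnd kf2) //.
have kNf2 : k \notin domf m2 by rewrite -Hd.
by case: (vy yf); rewrite fnd_inst not_fnd.
Qed.

Lemma stack_sel vx vy yf (s1 s2 : cmem) :
  size s1 = size s2 ->
  (forall t, domf (nth [fmap] s1 t) = domf (nth [fmap] s2 t)) ->
  inst_stack vx vy [seq msel yf mm.1 mm.2 | mm <- zip s1 s2] =
  if vy yf then inst_stack vx vy s2 else inst_stack vx vy s1.
Proof.
elim: s1 s2 => [|m1 s1 IH] [|m2 s2] //=; first by case: (vy yf).
move=> [Hs] Hd; rewrite (msel_inst _ _ _ _ _ (Hd 0%N)).
have := IH s2 Hs (fun t => Hd t.+1); rewrite /inst_stack => ->.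
by case: (vy yf).
Qed.

Lemma realcM (R : realType) (x y : R) : (x*y)%:C = x%:C * y%:C.
Proof. exact: (rmorphM (real_complex R)). Qed.

Definition term (R : realType) (h : hps R) vx vy (eta : history) (b : basis) : R[i] :=
  if inst_stack vx vy (hcl h) == eta then
    (hs h vx vy)%:C * expi (phase_eval R vx vy (hP h)) * ket R (inst_map vx vy (hqu h)) b
  else 0.

Arguments term {R} h vx vy eta b.

Lemma xiE (R : realType) (h : hps R) vx eta b :
  xi h vx eta b = \sum_(S <- fpowerset (hsu h)) term h vx (valS S) eta b.
Proof. by rewrite /xi big_mkcond. Qed.

Lemma term_boxplus (R : realType) (h1 h2 : hps R) a yf vx vy eta b :
  sum_defined h1 h2 ->
  term (boxplus a yf h1 h2) vx vy eta b =
  if vy yf then term h2 vx vy eta b * (prodY R (hsu h1 `\` hsu h2) vy)%:C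
  else a%:C * term h1 vx vy eta b * (prodY R (hsu h2 `\` hsu h1) vy)%:C.
Proof.
case=> Hq Hs Hd; rewrite /term /=.
rewrite stack_sel // psel_eval msel_inst //.
case: (vy yf); case: (_ == eta); rewrite ?mul0r ?mulr0 ?mul0r // ?(rmorphM (real_complex R)); ring.
Qed.


Lemma term_inv (R : realType) (h : hps R) vx vy vy' eta b :
  wf_hps h -> {in hsu h, vy =1 vy'} -> term h vx vy eta b = term h vx vy' eta b.
Proof.
case=> HP Hq Hcl Hs _ Hin; rewrite /term (Hs vx vy vy' Hin).
rewrite (@phase_eval_eq R vx vy vy'); last by move=> z /HP /Hin.
rewrite (@inst_map_eq vx vy vy'); last by move=> k z /(Hq k) /Hin.
have -> // : inst_stack vx vy (hcl h) = inst_stack vx vy' (hcl h).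
by apply/eq_in_map => m mIn; apply: inst_map_eq => k z /(Hcl m mIn k) /Hin.
Qed.

Lemma capU {A B S1 S2 : {fset nat}} :
  [disjoint A & B] -> S1 `<=` A -> S2 `<=` B -> (S1 `|` S2) `&` A = S1.
Proof.
move=> /fdisjointP dAB /fsubsetP s1 /fsubsetP s2; apply/fsetP => x; rewrite !inE.
case x1: (x \in S1) => /=; first by rewrite s1.
case x2: (x \in S2) => //=; apply/negbTE/negP => xA.
by move: (dAB x xA); rewrite s2.
Qed.

Lemma sum_fpowersetU (V : nmodType) (A B : {fset nat}) (F : {fset nat} -> V) :
  [disjoint A & B] ->
  \sum_(S <- fpowerset (A `|` B)) F S =
  \sum_(S1 <- fpowerset A) \sum_(S2 <- fpowerset B) F (S1 `|` S2).
Proof.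
move=> dAB.
rewrite -(big_allpairs_dep (h := fun S1 S2 => S1 `|` S2) (r1 := fpowerset A) (r2 := fun=> fpowerset B)) /=.
apply: perm_big; apply: uniq_perm; first exact: fset_uniq.
  apply: allpairs_uniq; try exact: fset_uniq.
  move=> [S1 S2] [T1 T2] /allpairsP [[U1 U2] /= [U1in U2in [-> ->]]].
  move=> /allpairsP [[W1 W2] /= [W1in W2in [-> ->]]] /= E.
  move: U1in U2in W1in W2in; rewrite !fpowersetE => u1 u2 w1 w2.
  have dBA : [disjoint B & A] by rewrite fdisjoint_sym.
  congr pair.
    by rewrite -(capU dAB u1 u2) -(capU dAB w1 w2) E.
  by rewrite -(capU dBA u2 u1) -(capU dBA w2 w1) fsetUC E fsetUC.
move=> S; rewrite fpowersetE; apply/idP/allpairsP => [Ssub|[[S1 S2] /= [S1in S2in ->]]].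
  exists (S `&` A, S `&` B); rewrite /= !fpowersetE !fsubsetIr; split => //.
  by rewrite -fsetIUr; apply/esym/fsetIidPl.
by move: S1in S2in; rewrite !fpowersetE; apply: fsetUSS.
Qed.

Lemma sum_fpowersetU1 (V : nmodType) (A : {fset nat}) a (F : {fset nat} -> V) :
  a \notin A ->
  \sum_(S <- fpowerset (A `|` [fset a])) F S =
  \sum_(S <- fpowerset A) (F S + F (S `|` [fset a])).
Proof.
move=> aA; rewrite sum_fpowersetU; last first.
  by apply/fdisjointP => x xA; rewrite inE; apply/negP => /eqP xa; move: aA; rewrite -xa xA.
apply: eq_bigr => S _; rewrite fpowerset1 big_fsetU1 ?big_seq_fset1 ?fsetU0 //.
rewrite inE; apply/negP => /eqP E.
by move: (fset11 a); rewrite -E inE.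
Qed.

Lemma sum_fpowerset_sub (V : nmodType) (A B : {fset nat}) (F : {fset nat} -> V) :
  [disjoint A & B] ->
  \sum_(S <- fpowerset (A `|` B)) (if B `<=` S then F S else 0) =
  \sum_(T <- fpowerset A) F (T `|` B).
Proof.
move=> dAB; rewrite sum_fpowersetU //; apply: eq_big_seq => T; rewrite fpowersetE => TA.
rewrite (bigD1_seq B) ?fpowersetE ?fsubset_refl ?fset_uniq //= fsubsetUr.
rewrite big1_seq ?addr0 // => U /andP [UB]; rewrite fpowersetE => Usub.
case: ifP => // /fsubsetP BTU; case/negP: UB; rewrite eqEfsubset Usub /=.
apply/fsubsetP => x xB; have := BTU x xB; rewrite inE => /orP [xT|//].
by move/fdisjointP: dAB => /(_ x (fsubsetP TA x xT)); rewrite xB.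
Qed.

Lemma prodY_eq (R : realType) D vy vy' :
  {in D, vy =1 vy'} -> prodY R D vy = prodY R D vy'.
Proof. by move=> H; rewrite /prodY; apply: eq_big_seq => j /H ->. Qed.

Lemma prodY_valS (R : realType) D S : prodY R D (valS S) = (D `<=` S)%:R.
Proof.
rewrite /prodY /valS.
have -> : (D `<=` S) = all (fun j => j \in S) D by apply/fsubsetP/allP.
elim: (enum_fset D) => [|x s IH]; first by rewrite big_nil.
by rewrite big_cons /= IH; case: (x \in S); rewrite ?mul1r ?mul0r.
Qed.

Lemma mulC_if (R : realType) (x : R[i]) (c : bool) :
  x * ((c%:R : R)%:C) = if c then x else 0.
Proof. by case: c; rewrite /= ?(rmorph1 (real_complex R)) ?(rmorph0 (real_complex R)) ?mulr1 ?mulr0. Qed.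


Lemma valSU (S X A : {fset nat}) :
  [disjoint X & A] -> {in A, valS (S `|` X) =1 valS S}.
Proof.
move=> /fdisjointP dXA j jA; rewrite /valS inE.
case jX: (j \in X); last by rewrite orbF.
by move: (dXA j jX); rewrite jA.
Qed.

Lemma part1 (R : realType) (h1 h2 : hps R) a yf vx eta b :
  wf_hps h1 -> wf_hps h2 -> sum_defined h1 h2 -> yf \notin hsu h1 `|` hsu h2 ->
  xi (boxplus a yf h1 h2) vx eta b = (a%:C * xi h1 vx eta b + xi h2 vx eta b)%R.
Proof.
move=> w1 w2 sd yfN.
rewrite !xiE /= sum_fpowersetU1 // big_split /=.
have yf1 : yf \notin hsu h1 by move: yfN; rewrite inE negb_or => /andP[].
have yf2 : yf \notin hsu h2 by move: yfN; rewrite inE negb_or => /andP[].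
congr (_ + _)%R.
  rewrite (eq_big_seq (fun S => if hsu h2 `\` hsu h1 `<=` S then
                 a%:C * term h1 vx (valS S) eta b else 0)); last first.
    move=> S; rewrite fpowersetE => /fsubsetP Ssub.
    rewrite term_boxplus //.
    have -> : valS S yf = false by apply: negbTE; apply/negP => /Ssub; apply/negP.
    by rewrite prodY_valS mulC_if.
  rewrite (_ : hsu h1 `|` hsu h2 = hsu h1 `|` (hsu h2 `\` hsu h1)); last first.
    by apply/fsetP => x; rewrite !inE; case: (x \in hsu h1); rewrite ?orbT.
  rewrite sum_fpowerset_sub; last by apply/fdisjointP => x; rewrite inE negb_and negbK => ->.
  rewrite mulr_sumr; apply: eq_big_seq => T _; congr (_ * _); apply: term_inv => //.
  by apply: valSU; apply/fdisjointP => x; rewrite inE => /andP[].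
rewrite (eq_big_seq (fun S => if hsu h1 `\` hsu h2 `<=` S then
                 term h2 vx (valS S) eta b else 0)); last first.
  move=> S; rewrite fpowersetE => /fsubsetP Ssub.
  rewrite term_boxplus //.
  have -> : valS (S `|` [fset yf]) yf by rewrite /valS !inE eqxx orbT.
  rewrite (@prodY_eq R (hsu h1 `\` hsu h2) (valS (S `|` [fset yf])) (valS S)); last first.
    apply: valSU; apply/fdisjointP => x; rewrite !inE => /eqP ->.
    by rewrite (negbTE yf1) andbF.
  rewrite prodY_valS mulC_if (@term_inv R h2 vx _ (valS S)) //.
  apply: valSU; apply/fdisjointP => x; rewrite !inE => /eqP -> //.
rewrite (_ : hsu h1 `|` hsu h2 = hsu h2 `|` (hsu h1 `\` hsu h2)); last first.
  by apply/fsetP => x; rewrite !inE; case: (x \in hsu h2); rewrite ?orbT ?orbF.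
rewrite sum_fpowerset_sub; last by apply/fdisjointP => x; rewrite inE negb_and negbK => ->.
apply: eq_big_seq => T _; apply: term_inv => //.
by apply: valSU; apply/fdisjointP => x; rewrite inE => /andP[].
Qed.


Lemma domf_inst vx vy (m : {fmap nat -> bpoly}) : domf (inst_map vx vy m) = domf m.
Proof. by []. Qed.

Lemma inst_cat vx vy (m1 m2 : {fmap nat -> bpoly}) :
  inst_map vx vy (m1 + m2) = inst_map vx vy m1 + inst_map vx vy m2.
Proof.
apply/fmapP => k; rewrite fnd_inst !fnd_cat !fnd_inst domf_inst.
by case: ifP.
Qed.

Lemma inst_map0 vx vy : inst_map vx vy [fmap] = [fmap].
Proof. by apply/fmapP => k; rewrite fnd_inst !fnd_fmap0. Qed.

Lemma nth_inst vx vy (s : cmem) t :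
  nth [fmap] (inst_stack vx vy s) t = inst_map vx vy (nth [fmap] s t).
Proof.
case: (ltnP t (size s)) => H; first by rewrite (nth_map [fmap]).
by rewrite !nth_default ?inst_map0 // size_map.
Qed.

Lemma inst_union vx vy (s1 s2 : cmem) :
  inst_stack vx vy (stack_union s1 s2) =
  stack_union (inst_stack vx vy s1) (inst_stack vx vy s2).
Proof.
rewrite /stack_union /inst_stack /mkseq -map_comp !size_map; apply: eq_map => t /=.
by rewrite !nth_inst inst_cat.
Qed.

Lemma all2_dom (s : cmem) (e : history) :
  all2 (fun (m : {fmap nat -> bpoly}) (e : {fmap nat -> bool}) => domf e == domf m) s e ->
  size e = size s /\ forall t, domf (nth [fmap] e t) = domf (nth [fmap] s t).
Proof.
elim: s e => [|m s IH] [|x e] //=; first by move=> _; split => // t; rewrite !nth_nil.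
move=> /andP [/eqP Hx /IH [Hs Hn]]; split; first by rewrite Hs.
by case.
Qed.

Lemma catf_inj (V : Type) (f f' g g' : {fmap nat -> V}) :
  domf f = domf f' -> domf g = domf g' -> [disjoint domf f & domf g] ->
  f + g = f' + g' -> f = f' /\ g = g'.
Proof.
move=> Df Dg /fdisjointP dfg E; split; apply/fmapP => k;
  have kgg : (k \in domf g') = (k \in domf g) by rewrite Dg.
  case kg: (k \in domf g).
    have kNf : k \notin domf f by apply/negP => /dfg; rewrite kg.
    have kNf' : k \notin domf f' by rewrite -Df.
    by rewrite !not_fnd.
  by have := congr1 (fun m : {fmap nat -> V} => m.[? k]) E; rewrite /= !fnd_cat kgg kg.
case kg: (k \in domf g).
  by have := congr1 (fun m : {fmap nat -> V} => m.[? k]) E; rewrite /= !fnd_cat kgg kg.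
have kNg' : k \notin domf g' by rewrite -Dg kg.
by rewrite !not_fnd ?kg.
Qed.

Lemma union_eq (V : Type) (I1 I2 e1 e2 : seq {fmap nat -> V}) :
  size I1 = size e1 -> size I2 = size e2 ->
  (forall t, domf (nth [fmap] I1 t) = domf (nth [fmap] e1 t)) ->
  (forall t, domf (nth [fmap] I2 t) = domf (nth [fmap] e2 t)) ->
  (forall t, [disjoint domf (nth [fmap] I1 t) & domf (nth [fmap] I2 t)]) ->
  stack_union I1 I2 = stack_union e1 e2 -> I1 = e1 /\ I2 = e2.
Proof.
move=> s1 s2 d1 d2 dj E.
have H t : (t < maxn (size I1) (size I2))%N ->
    nth [fmap] I1 t = nth [fmap] e1 t /\ nth [fmap] I2 t = nth [fmap] e2 t.
  move=> tlt; apply: catf_inj => //.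
  have := congr1 (fun s => nth [fmap] s t) E.
  by rewrite /stack_union !nth_mkseq -?s1 -?s2.
split; apply: (eq_from_nth (x0 := [fmap])) => // t tlt.
  by case: (H t _) => //; rewrite leq_max tlt.
by case: (H t _) => //; rewrite leq_max tlt orbT.
Qed.

Lemma ket_cat (R : realType) (i1 i2 b : {fmap nat -> bool}) :
  [disjoint domf i1 & domf i2] ->
  ket R (i1 + i2) b = if domf b == domf i1 `|` domf i2 then
     ket R i1 b.[& domf i1] * ket R i2 b.[& domf i2] else 0.
Proof.
move=> /fdisjointP dj; rewrite /ket.
have -> : (b == i1 + i2) =
   [&& domf b == domf i1 `|` domf i2, b.[& domf i1] == i1 & b.[& domf i2] == i2].
  apply/eqP/and3P => [->|[/eqP D /eqP E1 /eqP E2]].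
    split; first by rewrite domf_cat.
      apply/eqP/fmapP => k; rewrite fnd_restrict fnd_cat.
      case k1: (k \in domf i1); last by rewrite not_fnd ?k1.
      by have := dj k k1; case: (k \in domf i2).
    apply/eqP/fmapP => k; rewrite fnd_restrict fnd_cat.
    by case k2: (k \in domf i2); last by rewrite not_fnd ?k2.
  apply/fmapP => k; rewrite fnd_cat.
  case k2: (k \in domf i2); first by rewrite -E2 fnd_restrict k2.
  case k1: (k \in domf i1); first by rewrite -E1 fnd_restrict k1.
  have kb : k \notin domf b by rewrite D inE k1 k2.
  by rewrite (not_fnd kb) (not_fnd (negbT k1)).
case: (domf b == _); case: (b.[& _] == _); case: (b.[& _] == _);
  by rewrite /= ?(rmorph1 (real_complex R)) ?(rmorph0 (real_complex R)) ?mulr1 ?mulr0.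
Qed.

Lemma expiD (R : realType) (x y : R) : expi (x + y)%R = (expi x * expi y)%R.
Proof.
rewrite /expi !mulrDr cosD sinD.
rewrite -[((_ +i* _) * (_ +i* _))%C]/(_ +i* _)%C; congr (_ +i* _)%C; ring.
Qed.


Lemma phase_cat (R : realType) vx vy (P Q : phase) :
  phase_eval R vx vy (P ++ Q) = (phase_eval R vx vy P + phase_eval R vx vy Q)%R.
Proof. by rewrite /phase_eval big_cat. Qed.

Lemma term_tensor (R : realType) (h1 h2 : hps R) vx vy e1 e2 b :
  tensor_defined h1 h2 -> is_history h1 e1 -> is_history h2 e2 ->
  term (tensor h1 h2) vx vy (hist_tensor e1 e2) b =
  vtensor (domf (hqu h1)) (domf (hqu h2)) (term h1 vx vy e1) (term h2 vx vy e2) b.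
Proof.
case=> _ dq dcl /all2_dom [se1 de1] /all2_dom [se2 de2].
rewrite /term /vtensor /= inst_union.
have -> : (stack_union (inst_stack vx vy (hcl h1)) (inst_stack vx vy (hcl h2))
             == hist_tensor e1 e2) =
          (inst_stack vx vy (hcl h1) == e1) && (inst_stack vx vy (hcl h2) == e2).
  apply/eqP/andP => [E|[/eqP -> /eqP ->] //].
  have s1 : size (inst_stack vx vy (hcl h1)) = size e1 by rewrite size_map se1.
  have s2 : size (inst_stack vx vy (hcl h2)) = size e2 by rewrite size_map se2.
  have d1 t : domf (nth [fmap] (inst_stack vx vy (hcl h1)) t) = domf (nth [fmap] e1 t).
    by rewrite nth_inst domf_inst de1.
  have d2 t : domf (nth [fmap] (inst_stack vx vy (hcl h2)) t) = domf (nth [fmap] e2 t).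
    by rewrite nth_inst domf_inst de2.
  have dj t : [disjoint domf (nth [fmap] (inst_stack vx vy (hcl h1)) t)
               & domf (nth [fmap] (inst_stack vx vy (hcl h2)) t)].
    by rewrite !nth_inst !domf_inst.
  by have [-> ->] := @union_eq bool _ _ _ _ s1 s2 d1 d2 dj E.
rewrite inst_cat ket_cat // phase_cat expiD (rmorphM (real_complex R)) !domf_inst.
case: (inst_stack vx vy (hcl h1) == e1); case: (inst_stack vx vy (hcl h2) == e2);
  case: (domf b == _); rewrite /= ?mul0r ?mulr0 ?mul0r //.
move: (hs h1 vx vy)%:C (hs h2 vx vy)%:C (expi _) (expi _) (ket R _ _) (ket R _ _).
by move=> c1 c2 x1 x2 k1 k2; ring.
Qed.

Lemma part2 (R : realType) (h1 h2 : hps R) vx e1 e2 b :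
  wf_hps h1 -> wf_hps h2 -> tensor_defined h1 h2 ->
  is_history h1 e1 -> is_history h2 e2 ->
  xi (tensor h1 h2) vx (hist_tensor e1 e2) b =
  vtensor (domf (hqu h1)) (domf (hqu h2)) (xi h1 vx e1) (xi h2 vx e2) b.
Proof.
move=> w1 w2 td he1 he2; have td' := td; case: td' => dsu _ _.
rewrite xiE /= sum_fpowersetU //.
rewrite (eq_big_seq (fun S1 => \sum_(S2 <- fpowerset (hsu h2))
   vtensor (domf (hqu h1)) (domf (hqu h2)) (term h1 vx (valS S1) e1)
           (term h2 vx (valS S2) e2) b)); last first.
  move=> S1; rewrite fpowersetE => s1; apply: eq_big_seq => S2; rewrite fpowersetE => s2.
  have H1 : {in hsu h1, valS (S1 `|` S2) =1 valS S1}.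
    apply: valSU; apply/fdisjointP => x /(fsubsetP s2) x2; apply/negP => x1.
    by move/fdisjointP: dsu => /(_ x x1); rewrite x2.
  have H2 : {in hsu h2, valS (S1 `|` S2) =1 valS S2}.
    rewrite fsetUC; apply: valSU; apply/fdisjointP => x /(fsubsetP s1) x1.
    by move/fdisjointP: dsu => /(_ x x1).
  rewrite (@term_tensor R h1 h2 vx (valS (S1 `|` S2)) e1 e2 b td he1 he2) /vtensor.
  case: (domf b == domf (hqu h1) `|` domf (hqu h2)); last reflexivity.
  rewrite (@term_inv R h1 vx (valS (S1 `|` S2)) (valS S1) e1 _ w1 H1).
  rewrite (@term_inv R h2 vx (valS (S1 `|` S2)) (valS S2) e2 _ w2 H2).
  reflexivity.
rewrite /vtensor; case: (domf b == domf (hqu h1) `|` domf (hqu h2)); last by rewrite big1 // => S1 _; rewrite big1.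
rewrite !xiE big_distrl /=; apply: eq_bigr => S1 _; rewrite big_distrr /=.
by [].
Qed.

End Helpers.

Theorem mainTheorem1 (R : realType) (h1 h2 : hps R) :
  wf_hps h1 -> wf_hps h2 ->
  (forall (a : R) (yf : nat),
      constructible a -> sum_defined h1 h2 -> yf \notin (hsu h1 `|` hsu h2)%fset ->
      forall (vx : nat -> bool) (eta : history) (b : basis),
        xi (boxplus a yf h1 h2) vx eta b = a%:C * xi h1 vx eta b + xi h2 vx eta b)
  /\
  (tensor_defined h1 h2 ->
      forall (vx : nat -> bool) (eta1 eta2 : history),
        is_history h1 eta1 -> is_history h2 eta2 ->
        forall b : basis,
          xi (tensor h1 h2) vx (hist_tensor eta1 eta2) b
          = vtensor (domf (hqu h1)) (domf (hqu h2)) (xi h1 vx eta1) (xi h2 vx eta2) b).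
Proof.
move=> w1 w2; split => [a yf _ sd yfN vx eta b | td vx e1 e2 he1 he2 b].
  exact: part1.
exact: part2.
Qed.
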